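(* Let $R$ be a poset, $Q:=I_{<\omega}(R)$ and $\kappa:=|Q|$. Then there is a set $\mathbb{B}$ of join-semilattices with $|\mathbb{B}|\le 2^{\kappa}$ such that for every join-semilattice $P$ (with a least element), $J(Q)$ is not embeddable in $J(P)$ by a map preserving arbitrary joins if and only if no member of $\mathbb{B}$ is embeddable in $P$ as a join-semilattice.
   Context: $I_{<\omega}(R)$ is the set of finitely generated initial segments $\downarrow A$ ($A\subseteq R$ finite) of $R$, ordered by inclusion. For a join-semilattice $P$, $J(P)$ is the set of ideals (non-empty up-directed initial segments) of $P$ ordered by inclusion. Embedding as a join-semilattice means an injective map preserving binary joins. A map preserving arbitrary joins is one with $f(\bigvee X)=\bigvee f(X)$ for all subsets $X$. *)

(* Defs.v *)
From Stdlib Require Import List.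

Record Poset := {
  pcar :> Type;
  ple : pcar -> pcar -> Prop;
  ple_refl : forall x, ple x x;
  ple_trans : forall x y z, ple x y -> ple y z -> ple x z;
  ple_antisym : forall x y, ple x y -> ple y x -> x = y
}.

Record JSL := {
  jcar :> Type;
  jle : jcar -> jcar -> Prop;
  jle_refl : forall x, jle x x;
  jle_trans : forall x y z, jle x y -> jle y z -> jle x z;
  jle_antisym : forall x y, jle x y -> jle y x -> x = y;
  jjoin : jcar -> jcar -> jcar;
  jjoin_lub : forall x y z, jle (jjoin x y) z <-> (jle x z /\ jle y z)
}.

Definition has_least (P : JSL) : Prop := exists b : P, forall x : P, jle P b x.

Definition Ifin (R : Poset) : Type :=
  { S : R -> Prop | exists A : list R,
      forall x : R, S x <-> exists a, In a A /\ ple R x a }.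

Definition Ifin_le (R : Poset) (S T : Ifin R) : Prop :=
  forall x, proj1_sig S x -> proj1_sig T x.

Definition is_ideal {T : Type} (le : T -> T -> Prop) (X : T -> Prop) : Prop :=
  (exists x, X x) /\
  (forall x y, le x y -> X y -> X x) /\
  (forall x y, X x -> X y -> exists z, X z /\ le x z /\ le y z).

Definition Jid {T : Type} (le : T -> T -> Prop) : Type :=
  { X : T -> Prop | is_ideal le X }.

Definition Jle {T : Type} {le : T -> T -> Prop} (I K : Jid le) : Prop :=
  forall x, proj1_sig I x -> proj1_sig K x.

Definition is_lub {T : Type} (le : T -> T -> Prop) (X : T -> Prop) (s : T) : Prop :=
  (forall x, X x -> le x s) /\
  (forall u, (forall x, X x -> le x u) -> le s u).

Definition injective {A B : Type} (f : A -> B) : Prop :=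
  forall x y, f x = f y -> x = y.

Definition preserves_all_joins {T1 T2 : Type}
  (le1 : T1 -> T1 -> Prop) (le2 : T2 -> T2 -> Prop) (f : T1 -> T2) : Prop :=
  forall (X : T1 -> Prop) (s : T1), is_lub le1 X s ->
    is_lub le2 (fun y => exists x, X x /\ f x = y) (f s).

Definition jsl_embedding {B P : JSL} (g : B -> P) : Prop :=
  injective g /\ forall x y, g (jjoin B x y) = jjoin P (g x) (g y).

(* Main.v *)
Require Import Defs.
From Stdlib Require Import Classical ClassicalEpsilon FunctionalExtensionality PropExtensionality ProofIrrelevance List Arith Lia Cantor.
From mathcomp Require boolp classical_sets.

Lemma zornP (T : Type) (t0 : T) (Rl : T -> T -> Prop) :
  (forall t, Rl t t) -> (forall r s t, Rl r s -> Rl s t -> Rl r t) ->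
  (forall A : T -> Prop, (forall s t, A s -> A t -> Rl s t \/ Rl t s) ->
     exists t, forall s, A s -> Rl s t) ->
  exists t, forall s, Rl t s -> Rl s t.
Proof.
intros Hr Ht Hc.
assert (E : forall s t, is_true (boolp.asbool (Rl s t)) <-> Rl s t).
{ intros s t. rewrite boolp.asboolE. tauto. }
destruct (@classical_sets.ZL_preorder T t0 (fun s t => boolp.asbool (Rl s t))) as [z Hz].
- intro t; apply E; auto.
- intros r s t H1 H2; apply E; apply E in H1; apply E in H2; eauto.
- intros A HA. destruct (Hc A) as [t Ht'].
  + intros s t As At. destruct (HA s t As At) as [H|H]; [left|right]; apply E; exact H.
  + exists t; intros s As; apply E; auto.
- exists z. intros s H. apply E. apply Hz. apply E. exact H.
Qed.

Section Comp.
Variable X : Type.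
Variables U V : X -> Prop.

Definition pinj (p : (X -> Prop) * (X -> X)) :=
  (forall x, fst p x -> U x) /\ (forall x, fst p x -> V (snd p x)) /\
  (forall x y, fst p x -> fst p y -> snd p x = snd p y -> x = y).

Definition PIT := { p | pinj p }.
Definition pile (s t : PIT) :=
  (forall x, fst (proj1_sig s) x -> fst (proj1_sig t) x) /\
  (forall x, fst (proj1_sig s) x -> snd (proj1_sig t) x = snd (proj1_sig s) x).

Lemma comparability (x0 : X) :
  (exists k : X -> X, (forall u, U u -> V (k u)) /\ (forall u u', U u -> U u' -> k u = k u' -> u = u'))
  \/ (exists k : X -> X, (forall v, V v -> U (k v)) /\ (forall v v', V v -> V v' -> k v = k v' -> v = v')).
Proof.
assert (H0 : pinj ((fun _ => False), fun x => x)).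
{ split; [|split]; simpl; tauto. }
destruct (zornP PIT (exist _ _ H0) pile) as [[[D k] [HU [HV Hi]]] Hm].
- intro t; split; auto.
- intros r s t [a1 a2] [b1 b2]; split; auto. intros x Hx. rewrite b2 by auto. auto.
- intros A HA.
  destruct (classic (exists c, A c)) as [[c0 Hc0]|Hn].
  2:{ exists (exist _ _ H0). intros s As; exfalso; eauto. }
  set (D' := fun x => exists c, A c /\ fst (proj1_sig c) x).
  set (k' := fun x => epsilon (inhabits x) (fun v => exists c, A c /\ fst (proj1_sig c) x /\ snd (proj1_sig c) x = v)).
  assert (Hk : forall c x, A c -> fst (proj1_sig c) x -> k' x = snd (proj1_sig c) x).
  { intros c x Ac Dx. unfold k'.
    assert (Ex : exists v, exists c, A c /\ fst (proj1_sig c) x /\ snd (proj1_sig c) x = v).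
    { exists (snd (proj1_sig c) x); eauto. }
    destruct (epsilon_spec (inhabits x) _ Ex) as [c' [Ac' [Dx' E]]].
    rewrite <- E. destruct (HA c c' Ac Ac') as [[l1 l2]|[l1 l2]].
    - apply l2; auto.
    - symmetry; apply l2; auto. }
  assert (Hp : pinj (D', k')).
  { split; [|split]; simpl.
    - intros x [c [Ac Dx]]. destruct c as [[Dc kc] [Uc ?]]; simpl in *; auto.
    - intros x [c [Ac Dx]]. rewrite (Hk c x Ac Dx). destruct c as [[Dc kc] [Uc [Vc ?]]]; simpl in *; auto.
    - intros x y [c [Ac Dx]] [c' [Ac' Dy]]. rewrite (Hk c x Ac Dx), (Hk c' y Ac' Dy).
      destruct (HA c c' Ac Ac') as [[l1 l2]|[l1 l2]].
      + rewrite <- (l2 x Dx). destruct c' as [[Dc kc] [Uc [Vc Ic]]]; simpl in *. intros; apply Ic; auto.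
      + rewrite <- (l2 y Dy). destruct c as [[Dc kc] [Uc [Vc Ic]]]; simpl in *. intros; apply Ic; auto. }
  exists (exist _ _ Hp). intros s As. split; simpl.
  + intros x Dx; exists s; auto.
  + intros x Dx. apply Hk; auto.
- simpl in *.
  destruct (classic (forall u, U u -> D u)) as [HD|HD].
  + left. exists k. split; auto.
  + destruct (classic (forall v, V v -> exists d, D d /\ k d = v)) as [HV'|HV'].
    * right. set (ki := fun v => epsilon (inhabits v) (fun d => D d /\ k d = v)).
      assert (Hki : forall v, V v -> D (ki v) /\ k (ki v) = v).
      { intros v Vv. unfold ki. apply (epsilon_spec (inhabits v) (fun d => D d /\ k d = v)). auto. }
      exists ki. split.
      -- intros v Vv. apply HU. apply Hki; auto.
      -- intros v v' Vv Vv' E. rewrite <- (proj2 (Hki v Vv)), <- (proj2 (Hki v' Vv')), E. reflexivity.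
    * exfalso.
      apply not_all_ex_not in HD. destruct HD as [u Hu]. apply imply_to_and in Hu. destruct Hu as [Uu nDu].
      apply not_all_ex_not in HV'. destruct HV' as [v Hv]. apply imply_to_and in Hv. destruct Hv as [Vv nv].
      set (D2 := fun x => D x \/ x = u).
      set (k2 := fun x => if excluded_middle_informative (x = u) then v else k x).
      assert (Hp : pinj (D2, k2)).
      { unfold k2, D2; split; [|split]; simpl.
        - intros x [Dx|Ex]; [auto | subst; auto].
        - intros x Dx. destruct (excluded_middle_informative (x = u)); auto.
          destruct Dx as [Dx|]; [auto|contradiction].
        - intros x y Dx Dy. destruct (excluded_middle_informative (x = u)) as [ex|ex];
           destruct (excluded_middle_informative (y = u)) as [ey|ey]; try congruence.
          + intro E. destruct Dy as [Dy|]; [|contradiction]. exfalso; apply nv; eauto.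
          + intro E. destruct Dx as [Dx|]; [|contradiction]. exfalso; apply nv; eauto.
          + destruct Dx as [Dx|]; [|contradiction]. destruct Dy as [Dy|]; [|contradiction]. auto. }
      destruct (Hm (exist _ _ Hp)) as [l1 l2].
      { split; simpl.
        - intros x Dx; left; auto.
        - intros x Dx. unfold k2. destruct (excluded_middle_informative (x = u)); subst; [contradiction|auto]. }
      simpl in l1. apply nDu. apply l1. right; auto.
Qed.
End Comp.

Section Hess.
Variable X : Type.
Variable e : nat -> X.
Hypothesis e_inj : forall m n, e m = e n -> m = n.

Definition hgood (p : (X -> Prop) * (X -> X -> X)) :=
  (forall n, fst p (e n)) /\ (forall a b, fst p a -> fst p b -> fst p (snd p a b)) /\
  (forall a b c d, fst p a -> fst p b -> fst p c -> fst p d -> snd p a b = snd p c d -> a = c /\ b = d).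

Definition HT := { p | hgood p }.
Definition hle (s t : HT) :=
  (forall x, fst (proj1_sig s) x -> fst (proj1_sig t) x) /\
  (forall a b, fst (proj1_sig s) a -> fst (proj1_sig s) b -> snd (proj1_sig t) a b = snd (proj1_sig s) a b).

Definition einv (a : X) : nat := epsilon (inhabits 0) (fun n => a = e n).
Lemma einv_e n : einv (e n) = n.
Proof.
unfold einv. assert (Ex : exists m, e n = e m) by eauto.
apply eq_sym, e_inj. exact (epsilon_spec (inhabits 0) _ Ex).
Qed.

Lemma to_inj p q : Cantor.to_nat p = Cantor.to_nat q -> p = q.
Proof. intro E. rewrite <- (Cantor.cancel_of_to p), <- (Cantor.cancel_of_to q), E. reflexivity. Qed.

Lemma base_good : hgood ((fun x => exists n, x = e n), fun a b => e (Cantor.to_nat (einv a, einv b))).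
Proof.
split; [|split]; simpl.
- eauto.
- eauto.
- intros a b c d [na ->] [nb ->] [nc ->] [nd ->] E.
  apply e_inj in E. rewrite !einv_e in E.
  apply (to_inj (na, nb) (nc, nd)) in E. inversion E; subst; auto.
Qed.

Theorem hessenberg : exists h : X -> X -> X, forall a b c d, h a b = h c d -> a = c /\ b = d.
Proof.
destruct (zornP HT (exist _ _ base_good) hle) as [[[A f] [HB [HC HI]]] Hm].
- intro t; split; auto.
- intros r s t [a1 a2] [b1 b2]; split; auto. intros a b Ha Hb. rewrite b2 by auto. auto.
- intros C HA.
  destruct (classic (exists c, C c)) as [[c0 Hc0]|Hn].
  2:{ exists (exist _ _ base_good). intros s As; exfalso; eauto. }
  set (A' := fun x => exists c, C c /\ fst (proj1_sig c) x).
  set (f' := fun a b => epsilon (inhabits a) (fun v => exists c, C c /\ fst (proj1_sig c) a /\ fst (proj1_sig c) b /\ snd (proj1_sig c) a b = v)).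
  assert (Hk : forall c a b, C c -> fst (proj1_sig c) a -> fst (proj1_sig c) b -> f' a b = snd (proj1_sig c) a b).
  { intros c a b Cc Da Db. unfold f'.
    assert (Ex : exists v, exists c, C c /\ fst (proj1_sig c) a /\ fst (proj1_sig c) b /\ snd (proj1_sig c) a b = v).
    { exists (snd (proj1_sig c) a b); eauto 6. }
    destruct (epsilon_spec (inhabits a) _ Ex) as [c' [Cc' [Da' [Db' E]]]].
    rewrite <- E. destruct (HA c c' Cc Cc') as [[l1 l2]|[l1 l2]].
    - apply l2; auto.
    - symmetry; apply l2; auto. }
  assert (Hmax : forall c1 c2, C c1 -> C c2 -> exists c, C c /\
     (forall x, fst (proj1_sig c1) x -> fst (proj1_sig c) x) /\ (forall x, fst (proj1_sig c2) x -> fst (proj1_sig c) x)).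
  { intros c1 c2 C1 C2. destruct (HA c1 c2 C1 C2) as [[l1 l2]|[l1 l2]].
    - exists c2; auto.
    - exists c1; auto. }
  assert (Hp : hgood (A', f')).
  { split; [|split]; simpl.
    - intro n. exists c0. split; auto. destruct c0 as [p [? ?]]; simpl; auto.
    - intros a b [c1 [C1 Da]] [c2 [C2 Db]]. destruct (Hmax c1 c2 C1 C2) as [c [Cc [s1 s2]]].
      rewrite (Hk c a b Cc (s1 _ Da) (s2 _ Db)). exists c; split; auto.
      destruct c as [p [? [Hcl ?]]]; simpl in *; auto.
    - intros a b c d [c1 [C1 Da]] [c2 [C2 Db]] [c3 [C3 Dc]] [c4 [C4 Dd]].
      destruct (Hmax c1 c2 C1 C2) as [c5 [C5 [s1 s2]]].
      destruct (Hmax c3 c4 C3 C4) as [c6 [C6 [s3 s4]]].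
      destruct (Hmax c5 c6 C5 C6) as [cc [Cc [s5 s6]]].
      rewrite (Hk cc a b Cc (s5 _ (s1 _ Da)) (s5 _ (s2 _ Db))).
      rewrite (Hk cc c d Cc (s6 _ (s3 _ Dc)) (s6 _ (s4 _ Dd))).
      destruct cc as [p [? [? Hi]]]; simpl in *. apply Hi; auto. }
  exists (exist _ _ Hp). intros s Cs. split; simpl.
  + intros x Dx; exists s; auto.
  + intros a b Da Db. apply Hk; auto.
- simpl in *.
  destruct (comparability X A (fun x => ~ A x) (e 0)) as [[k [Hk1 Hk2]]|[k [Hk1 Hk2]]].
  + exfalso.
    set (kinv := fun y => epsilon (inhabits y) (fun a => A a /\ k a = y)).
    set (A' := fun x => A x \/ exists a, A a /\ x = k a).
    set (tg := fun x => if excluded_middle_informative (A x) then false else true).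
    set (un := fun x => if excluded_middle_informative (A x) then x else kinv x).
    assert (Hrep : forall x, A' x -> A (un x) /\ x = (if tg x then k (un x) else un x)).
    { intros x [Ax|[a [Aa ->]]]; unfold tg, un.
      - destruct (excluded_middle_informative (A x)); [auto|contradiction].
      - destruct (excluded_middle_informative (A (k a))) as [Hka|Hka]; [exfalso; apply (Hk1 a); auto|].
        assert (Ex : exists a', A a' /\ k a' = k a) by eauto.
        destruct (epsilon_spec (inhabits (k a)) _ Ex) as [Ha' E]. fold (kinv (k a)) in Ha', E.
        split; [|rewrite E]; auto. }
    assert (HtgA : forall x, A x -> tg x = false).
    { intros x Ax; unfold tg; destruct (excluded_middle_informative (A x)); [auto|contradiction]. }
    assert (HtgN : forall x, A' x -> tg x = false -> A x).
    { intros x Hx; unfold tg; destruct (excluded_middle_informative (A x)); [auto|discriminate]. }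
    set (nt := fun a b => (if tg a then 1 else 0) + (if tg b then 2 else 0)).
    set (f' := fun a b => if orb (tg a) (tg b) then k (f (f (un a) (un b)) (e (nt a b))) else f a b).
    assert (Hp : hgood (A', f')).
    { split; [|split]; simpl.
      - intro n; left; auto.
      - intros a b Ha Hb. unfold f'.
        destruct (Hrep a Ha) as [Ua _]. destruct (Hrep b Hb) as [Ub _].
        destruct (orb (tg a) (tg b)) eqn:Et.
        + right. eexists; split; [|reflexivity]. apply HC; auto.
        + apply Bool.orb_false_iff in Et. destruct Et. left. apply HC; apply HtgN; auto.
      - intros a b c d Ha Hb Hc Hd. unfold f'.
        destruct (Hrep a Ha) as [Ua Ra]. destruct (Hrep b Hb) as [Ub Rb].
        destruct (Hrep c Hc) as [Uc Rc]. destruct (Hrep d Hd) as [Ud Rd].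
        destruct (orb (tg a) (tg b)) eqn:Et1; destruct (orb (tg c) (tg d)) eqn:Et2.
        + intro E. apply Hk2 in E; try (apply HC; auto).
          apply HI in E; try (apply HC; auto); try apply HB. destruct E as [E1 E2].
          apply HI in E1; auto. destruct E1 as [E3 E4]. apply e_inj in E2.
          unfold nt in E2.
          rewrite Ra, Rb, Rc, Rd.
          destruct (tg a), (tg b), (tg c), (tg d); simpl in *; try discriminate; try lia;
            rewrite ?E3, ?E4; split; reflexivity.
        + apply Bool.orb_false_iff in Et2. destruct Et2.
          intro E. exfalso. apply (Hk1 (f (f (un a) (un b)) (e (nt a b)))).
          * apply HC; auto. 
          * rewrite E. apply HC; apply HtgN; auto.
        + apply Bool.orb_false_iff in Et1. destruct Et1.
          intro E. exfalso. apply (Hk1 (f (f (un c) (un d)) (e (nt c d)))).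
          * apply HC; auto. 
          * rewrite <- E. apply HC; apply HtgN; auto.
        + apply Bool.orb_false_iff in Et1. apply Bool.orb_false_iff in Et2.
          destruct Et1, Et2. apply HI; apply HtgN; auto. }
    destruct (Hm (exist _ _ Hp)) as [l1 l2].
    { split; simpl.
      - intros x Ax; left; auto.
      - intros a b Aa Ab. unfold f'. rewrite (HtgA a Aa), (HtgA b Ab). reflexivity. }
    simpl in l1. apply (Hk1 (e 0)); auto. apply l1. right. eauto.
  + set (j := fun x => if excluded_middle_informative (A x) then f x (e 0) else f (k x) (e 1)).
    assert (Hj : forall x, A (j x)).
    { intro x; unfold j; destruct (excluded_middle_informative (A x)); apply HC; auto. }
    assert (Hji : forall x y, j x = j y -> x = y).
    { intros x y; unfold j.
      destruct (excluded_middle_informative (A x)), (excluded_middle_informative (A y)); intro E;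
        apply HI in E; auto; destruct E as [E1 E2]; try (apply e_inj in E2; discriminate); auto. }
    exists (fun a b => f (j a) (j b)). intros a b c d E. apply HI in E; auto.
    destruct E; split; apply Hji; auto.
Qed.
End Hess.

Section Q.
Variable R : Poset.

Definition qs (q : Ifin R) : R -> Prop := proj1_sig q.

Definition mkQ (A : list R) : Ifin R :=
  exist _ (fun x => exists a, In a A /\ ple R x a) (ex_intro _ A (fun x => iff_refl _)).

Lemma Q_down (q : Ifin R) x y : qs q x -> ple R y x -> qs q y.
Proof.
destruct q as [S [A HA]]; unfold qs; simpl. intros Hx Hyx.
apply HA in Hx. destruct Hx as [a [Ia Ha]]. apply HA. exists a; split; auto.
eapply ple_trans; eauto.
Qed.

Lemma Q_union (q1 q2 : Ifin R) : exists z : Ifin R, forall x, qs z x <-> qs q1 x \/ qs q2 x.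
Proof.
destruct q1 as [S1 [A1 H1]], q2 as [S2 [A2 H2]]; unfold qs; simpl.
exists (mkQ (A1 ++ A2)); simpl. intro x; split.
- intros [a [Ia Ha]]. apply in_app_or in Ia. destruct Ia; [left; apply H1|right; apply H2]; eauto.
- intros [Hx|Hx]; [apply H1 in Hx|apply H2 in Hx]; destruct Hx as [a [Ia Ha]]; exists a; split; auto;
   apply in_or_app; auto.
Qed.

Lemma jid_ext {T : Type} {le : T -> T -> Prop} (I K : Jid le) :
  (forall x, proj1_sig I x <-> proj1_sig K x) -> I = K.
Proof.
destruct I as [I HI], K as [K HK]; simpl; intro H.
assert (E : I = K) by (apply functional_extensionality; intro x; apply propositional_extensionality; auto).
subst. f_equal. apply proof_irrelevance.
Qed.

Lemma ifin_ext (I K : Ifin R) : (forall x, qs I x <-> qs K x) -> I = K.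
Proof.
destruct I as [I HI], K as [K HK]; unfold qs; simpl; intro H.
assert (E : I = K) by (apply functional_extensionality; intro x; apply propositional_extensionality; auto).
subst. f_equal. apply proof_irrelevance.
Qed.

Lemma lub_unique {T : Type} {le : T -> T -> Prop} (X : Jid le -> Prop) s s' :
  is_lub Jle X s -> is_lub Jle X s' -> s = s'.
Proof.
intros [u1 l1] [u2 l2]. apply jid_ext. intro x; split; intro Hx.
- apply (l1 s' u2); auto.
- apply (l2 s u1); auto.
Qed.

Lemma Q_cover_list (K : Jid (Ifin_le R)) (A : list R) :
  (forall a, In a A -> exists q, proj1_sig K q /\ qs q a) ->
  exists q, proj1_sig K q /\ forall a, In a A -> qs q a.
Proof.
destruct K as [K [Kne [Kdown Kdir]]]; simpl.
induction A as [|a A IH]; intro H.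
- destruct Kne as [q Hq]. exists q; split; auto. intros a [].
- destruct (H a (or_introl eq_refl)) as [q1 [Kq1 Hq1]].
  destruct IH as [q2 [Kq2 Hq2]]. { intros a' Ia'; apply H; right; auto. }
  destruct (Kdir q1 q2 Kq1 Kq2) as [z [Kz [l1 l2]]].
  exists z; split; auto. intros a' [<-|Ia']; [apply l1; auto| apply l2; apply Hq2; auto].
Qed.

Lemma Q_cover (K : Jid (Ifin_le R)) (q : Ifin R) :
  (forall x, qs q x -> exists q', proj1_sig K q' /\ qs q' x) -> proj1_sig K q.
Proof.
intro H. destruct q as [S [A HA]] eqn:Eq.
destruct (Q_cover_list K A) as [z [Kz Hz]].
{ intros a Ia. apply H. unfold qs; simpl. apply HA. exists a; split; auto. apply ple_refl. }
destruct K as [K [Kne [Kdown Kdir]]]; simpl in *.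
apply (Kdown _ z); auto. intros x Hx. simpl in Hx. apply HA in Hx. destruct Hx as [a [Ia Ha]].
eapply Q_down; eauto.
Qed.

Definition KsP (X : Jid (Ifin_le R) -> Prop) (q : Ifin R) : Prop :=
  forall x, qs q x -> exists K, X K /\ exists q', proj1_sig K q' /\ qs q' x.

Lemma KsP_ideal X : is_ideal (Ifin_le R) (KsP X).
Proof.
split; [|split].
- exists (mkQ nil). intros x [a [[] _]].
- intros x y Hxy Hy z Hz. apply Hy. apply Hxy; auto.
- intros x y Hx Hy. destruct (Q_union x y) as [z Hz]. exists z; split; [|split].
  + intros w Hw. apply Hz in Hw. destruct Hw; auto.
  + intros w Hw. apply Hz; auto.
  + intros w Hw. apply Hz; auto.
Qed.

Definition Ks X : Jid (Ifin_le R) := exist _ (KsP X) (KsP_ideal X).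

Lemma Ks_lub X : is_lub Jle X (Ks X).
Proof.
split.
- intros K XK q Kq x Hx. exists K; split; auto. exists q; auto.
- intros U HU q Hq. simpl in Hq. apply Q_cover. intros x Hx.
  destruct (Hq x Hx) as [K [XK [q' [Kq' Hq']]]]. exists q'; split; auto. apply (HU K XK); auto.
Qed.

End Q.

Lemma pres_mono {T1 T2 : Type} {le1 : T1 -> T1 -> Prop} {le2 : T2 -> T2 -> Prop}
  (f : Jid le1 -> Jid le2) : preserves_all_joins Jle Jle f ->
  forall K K', Jle K K' -> Jle (f K) (f K').
Proof.
intros Hf K K' HK.
assert (H : is_lub Jle (fun y => y = K \/ y = K') K').
{ split.
  - intros y [->| ->]; auto. intros x Hx; auto.
  - intros u Hu. apply Hu; auto. }
destruct (Hf _ _ H) as [u _]. apply u. exists K; auto.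
Qed.

Section A.
Variable R : Poset.
Variable P : JSL.
Variable b : P.
Hypothesis Hb : forall x, jle P b x.

Definition jL (x : R -> P) (L : list R) : P := fold_right (fun s acc => jjoin P (x s) acc) b L.

Lemma jL_le x L z : jle P (jL x L) z <-> forall a, In a L -> jle P (x a) z.
Proof.
induction L as [|a L IH]; simpl.
- split; auto. intros _ a [].
- rewrite jjoin_lub, IH. split.
  + intros [H1 H2] a' [<-|Ia]; auto.
  + intros H; split; auto.
Qed.

Lemma jL_in x L a : In a L -> jle P (x a) (jL x L).
Proof. intro Ia. apply (proj1 (jL_le x L (jL x L)) (jle_refl P _)); auto. Qed.

Lemma jleJ1 u v : jle P u (jjoin P u v).
Proof. apply (proj1 (jjoin_lub P u v (jjoin P u v)) (jle_refl P _)). Qed.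
Lemma jleJ2 u v : jle P v (jjoin P u v).
Proof. apply (proj1 (jjoin_lub P u v (jjoin P u v)) (jle_refl P _)). Qed.

Lemma id_b (U : Jid (jle P)) : proj1_sig U b.
Proof.
destruct U as [U0 HU]; simpl; destruct HU as [[y Hy] [Hd _]]. apply (Hd b y); auto.
Qed.

Lemma id_join (U : Jid (jle P)) u v : proj1_sig U u -> proj1_sig U v -> proj1_sig U (jjoin P u v).
Proof.
destruct U as [U0 HU]; simpl; destruct HU as [_ [Hd Hdir]]. intros Hu Hv.
destruct (Hdir u v Hu Hv) as [z [Hz [l1 l2]]]. apply (Hd _ z); auto. apply jjoin_lub; auto.
Qed.

Lemma id_jL (U : Jid (jle P)) x L : (forall a, In a L -> proj1_sig U (x a)) -> proj1_sig U (jL x L).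
Proof.
induction L as [|a L IH]; simpl; intro H.
- apply id_b.
- apply id_join; auto.
Qed.

Lemma id_down (U : Jid (jle P)) u v : jle P u v -> proj1_sig U v -> proj1_sig U u.
Proof. destruct U as [U0 HU]; simpl; destruct HU as [_ [Hd _]]. eauto. Qed.

Definition Wit := exists x : R -> P, forall r L, (forall s, In s L -> ~ ple R r s) -> ~ jle P (x r) (jL x L).

Section Right.
Variable x : R -> P.
Hypothesis Hx : forall r L, (forall s, In s L -> ~ ple R r s) -> ~ jle P (x r) (jL x L).

Definition fP (K : Jid (Ifin_le R)) (p : P) : Prop :=
  exists L, (forall a, In a L -> exists q, proj1_sig K q /\ qs R q a) /\ jle P p (jL x L).

Lemma fP_ideal K : is_ideal (jle P) (fP K).
Proof.
split; [|split].
- exists b. exists nil. split; [intros a []|apply jle_refl].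
- intros p p' Hp [L [HL Hl]]. exists L; split; auto. eapply jle_trans; eauto.
- intros p1 p2 [L1 [H1 l1]] [L2 [H2 l2]]. exists (jL x (L1 ++ L2)). split; [|split].
  + exists (L1 ++ L2); split; [|apply jle_refl]. intros a Ia. apply in_app_or in Ia; destruct Ia; auto.
  + eapply jle_trans; [exact l1|]. apply jL_le. intros a Ia. apply jL_in. apply in_or_app; auto.
  + eapply jle_trans; [exact l2|]. apply jL_le. intros a Ia. apply jL_in. apply in_or_app; auto.
Qed.

Definition fJ (K : Jid (Ifin_le R)) : Jid (jle P) := exist _ (fP K) (fP_ideal K).

Lemma fJ_mono K K' : Jle K K' -> Jle (fJ K) (fJ K').
Proof.
intros H p [L [HL Hl]]. exists L; split; [|exact Hl]. intros a Ia. destruct (HL a Ia) as [q [Kq Hq]]. exists q; split; [apply H; exact Kq|exact Hq].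

Qed.

Lemma fJ_refl K K' : Jle (fJ K) (fJ K') -> Jle K K'.
Proof.
intros H q Kq. apply Q_cover. intros a Ha.
assert (Hin : fP K' (x a)).
{ apply H. exists (a :: nil). split.
  - intros a' [<-|[]]. exists q; auto.
  - apply jL_in. left; auto. }
destruct Hin as [L [HL Hl]].
destruct (classic (exists s, In s L /\ ple R a s)) as [[s [Is Has]]|Hn].
- destruct (HL s Is) as [q' [Kq' Hq']]. exists q'; split; auto. eapply Q_down; eauto.
- exfalso. apply (Hx a L); auto. intros s Is Has. apply Hn; eauto.
Qed.

Lemma fJ_inj : injective fJ.
Proof.
intros K K' E. apply jid_ext. intro q; split; intro Hq.
- apply (fJ_refl K K'); auto. rewrite E. intros p Hp; auto.
- apply (fJ_refl K' K); auto. rewrite E. intros p Hp; auto.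
Qed.

Lemma fJ_pres : preserves_all_joins Jle Jle fJ.
Proof.
intros X s Hs. split.
- intros y [K [XK <-]]. apply fJ_mono. apply (proj1 Hs); auto.
- intros U HU p [L [HL Hl]]. apply (id_down U _ _ Hl). apply id_jL. intros a Ia.
  destruct (HL a Ia) as [q [sq Hq]].
  assert (Hk : proj1_sig (Ks R X) q) by (apply (proj2 Hs (Ks R X) (proj1 (Ks_lub R X))); auto).
  destruct (Hk a Hq) as [K [XK [q' [Kq' Hq']]]].
  apply (HU (fJ K)). { exists K; auto. }
  exists (a :: nil). split.
  + intros a' [<-|[]]. exists q'; auto.
  + apply jL_in; left; auto.
Qed.
End Right.

Lemma A_right : Wit -> exists f : Jid (Ifin_le R) -> Jid (jle P),
  injective f /\ preserves_all_joins Jle Jle f.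
Proof.
intros [x Hx]. exists (fJ x). split; [apply fJ_inj|apply fJ_pres]; auto.
Qed.

Definition PrP (r : R) (q : Ifin R) : Prop := forall y, qs R q y -> ple R y r.
Definition NrP (r : R) (q : Ifin R) : Prop := forall y, qs R q y -> ~ ple R r y.

Lemma Pr_ideal r : is_ideal (Ifin_le R) (PrP r).
Proof.
split; [|split].
- exists (mkQ R nil). intros y [a [[] _]].
- intros q q' H H' y Hy. apply H'. apply H; auto.
- intros q1 q2 H1 H2. destruct (Q_union R q1 q2) as [z Hz]. exists z; split; [|split].
  + intros y Hy. apply Hz in Hy. destruct Hy; auto.
  + intros w Hw. apply Hz; auto.
  + intros w Hw. apply Hz; auto.
Qed.

Lemma Nr_ideal r : is_ideal (Ifin_le R) (NrP r).
Proof.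
split; [|split].
- exists (mkQ R nil). intros y [a [[] _]].
- intros q q' H H' y Hy. apply H'. apply H; auto.
- intros q1 q2 H1 H2. destruct (Q_union R q1 q2) as [z Hz]. exists z; split; [|split].
  + intros y Hy. apply Hz in Hy. destruct Hy as [Hy|Hy]; [apply H1|apply H2]; auto.
  + intros w Hw. apply Hz; auto.
  + intros w Hw. apply Hz; auto.
Qed.

Definition PrJ r : Jid (Ifin_le R) := exist _ (PrP r) (Pr_ideal r).
Definition NrJ r : Jid (Ifin_le R) := exist _ (NrP r) (Nr_ideal r).

Lemma A_left : (exists f : Jid (Ifin_le R) -> Jid (jle P),
  injective f /\ preserves_all_joins Jle Jle f) -> Wit.
Proof.
intros [f [Hi Hp]].
assert (Hsep : forall r, exists p, proj1_sig (f (PrJ r)) p /\ ~ proj1_sig (f (NrJ r)) p).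
{ intro r. apply NNPP. intro Hn.
  assert (Hsub : Jle (f (PrJ r)) (f (NrJ r))).
  { intros p Hp'. apply NNPP. intro Hn2. apply Hn. eauto. }
  set (X := fun y => y = PrJ r \/ y = NrJ r).
  destruct (Hp X (Ks R X) (Ks_lub R X)) as [u l].
  assert (Hl2 : is_lub Jle (fun y => exists x, X x /\ f x = y) (f (NrJ r))).
  { split.
    - intros y [x0 [[->| ->] <-]]; auto. intros p0 Hp0; auto.
    - intros u0 Hu0. apply Hu0. exists (NrJ r); split; auto. right; auto. }
  assert (E : f (Ks R X) = f (NrJ r)).
  { eapply lub_unique; [split; [exact u| exact l]| exact Hl2]. }
  apply Hi in E.
  assert (Hq : proj1_sig (Ks R X) (mkQ R (r :: nil))).
  { apply (proj1 (Ks_lub R X) (PrJ r)). left; auto. simpl. intros y [a [[<-|[]] Ha]]; auto. }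
  rewrite E in Hq. simpl in Hq. apply (Hq r). exists r; split; [left; auto| apply ple_refl]. apply ple_refl. }
set (x := fun r => proj1_sig (constructive_indefinite_description _ (Hsep r))).
assert (Hx : forall r, proj1_sig (f (PrJ r)) (x r) /\ ~ proj1_sig (f (NrJ r)) (x r)).
{ intro r. unfold x. destruct (constructive_indefinite_description _ (Hsep r)); auto. }
exists x. intros r L HL Hle.
apply (proj2 (Hx r)). apply (id_down _ _ _ Hle). apply id_jL. intros a Ia.
assert (Hs : Jle (PrJ a) (NrJ r)).
{ intros q Hq y Hy Hry. apply (HL a Ia). apply (ple_trans R r y a Hry). apply Hq; exact Hy. }
apply (pres_mono f Hp _ _ Hs). apply Hx.
Qed.

End A.

Lemma jsl_le_join (J : JSL) (u v : J) : jle J u v <-> jjoin J u v = v.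
Proof.
split.
- intro H. apply jle_antisym.
  + apply jjoin_lub; split; auto. apply jle_refl.
  + apply (proj1 (jjoin_lub J u v (jjoin J u v)) (jle_refl J _)).
- intro E. rewrite <- E. apply (proj1 (jjoin_lub J u v (jjoin J u v)) (jle_refl J _)).
Qed.

Lemma emb_le (B P : JSL) (g : B -> P) : jsl_embedding g -> forall u v, jle B u v <-> jle P (g u) (g v).
Proof.
intros [Hi Hj] u v. rewrite !jsl_le_join. rewrite <- Hj. split.
- intro E; rewrite E; auto.
- intro E; apply Hi; auto.
Qed.

Section T.
Variable R : Poset.
Variable rho : R -> list R -> Prop.

Definition leL (L M : list R) := forall a, In a L -> rho a M.

Definition TC := { S : list R -> Prop | exists L, forall M, S M <-> leL L M }.
Definition tle (S S' : TC) := forall M, proj1_sig S' M -> proj1_sig S M.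

Lemma tc_ext (S S' : TC) : (forall M, proj1_sig S M <-> proj1_sig S' M) -> S = S'.
Proof.
destruct S as [S HS], S' as [S' HS']; simpl; intro H.
assert (E : S = S') by (apply functional_extensionality; intro x; apply propositional_extensionality; auto).
subst. f_equal. apply proof_irrelevance.
Qed.

Lemma tjoin_ok (S S' : TC) : exists L, forall M, (proj1_sig S M /\ proj1_sig S' M) <-> leL L M.
Proof.
destruct S as [S [L HL]], S' as [S' [L' HL']]; simpl. exists (L ++ L'). intro M.
rewrite HL, HL'. unfold leL. split.
- intros [H1 H2] a Ia. apply in_app_or in Ia. destruct Ia; auto.
- intro H; split; intros a Ia; apply H; apply in_or_app; auto.
Qed.

Definition tjoin (S S' : TC) : TC := exist _ (fun M => proj1_sig S M /\ proj1_sig S' M) (tjoin_ok S S').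

Definition TJ : JSL.
Proof.
refine (Build_JSL TC tle _ _ _ tjoin _).
- intros S M H; exact H.
- intros x y z H1 H2 M H. apply H1. apply H2. exact H.
- intros x y H1 H2. apply tc_ext. intro M; split; [apply H2|apply H1].
- intros x y z. unfold tle; simpl. split.
  + intro H. split; intros M HM; apply (H M HM).
  + intros [H1 H2] M HM. split; auto.
Defined.

Definition cls (L : list R) : TJ := exist _ (fun M => leL L M) (ex_intro _ L (fun M => iff_refl _)).

Section Emb.
Variable P : JSL.
Variable b : P.
Hypothesis Hb : forall x, jle P b x.

Lemma T_to_Wit :
  (forall a L, In a L -> rho a L) -> (forall r L, rho r L -> exists s, In s L /\ ple R r s) ->
  (exists g : TJ -> P, jsl_embedding g) -> Wit R P b.
Proof.
intros Hrefl Hsep [g Hg].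
exists (fun r => g (cls (r :: nil))). intros r L HL Hle.
assert (H2 : jle P (jL R P b (fun r => g (cls (r :: nil))) L) (g (cls L))).
{ apply jL_le; auto. intros s Is. apply (emb_le _ _ g Hg). intros M HM a [<-|[]]. apply HM; auto. }
assert (H3 : jle TJ (cls (r :: nil)) (cls L)).
{ apply (emb_le _ _ g Hg). eapply jle_trans; eauto. }
assert (H4 : leL (r :: nil) L) by (apply H3; intros a Ia; apply Hrefl; auto).
destruct (Hsep r L (H4 r (or_introl eq_refl))) as [s [Is Hs]].
apply (HL s Is Hs).
Qed.

Variable x : R -> P.
Hypothesis Hrho : forall a M, rho a M <-> jle P (x a) (jL R P b x M).

Definition rep (S : TJ) : list R := proj1_sig (constructive_indefinite_description _ (proj2_sig S)).
Lemma rep_spec (S : TJ) : forall M, proj1_sig S M <-> leL (rep S) M.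
Proof. unfold rep. destruct (constructive_indefinite_description _ (proj2_sig S)); auto. Qed.

Definition gT (S : TJ) : P := jL R P b x (rep S).

Lemma gT_key (S : TJ) M : proj1_sig S M <-> jle P (gT S) (jL R P b x M).
Proof.
rewrite rep_spec. unfold gT, leL. rewrite jL_le by auto. split; intros H a Ia; apply Hrho; auto.
Qed.

Lemma Wit_to_T : exists g : TJ -> P, jsl_embedding g.
Proof.
exists gT. split.
- intros S S' E. apply tc_ext. intro M. rewrite !gT_key, E. tauto.
- intros S S'. apply (jle_antisym P).
  + eapply (jle_trans P); [apply gT_key|].
    * instantiate (1 := rep S ++ rep S'). simpl. split; apply gT_key; apply jL_le; auto;
        intros a Ia; apply (jL_in R P b Hb); auto; apply in_or_app; auto.
    * apply jL_le; auto. intros a Ia. apply in_app_or in Ia. destruct Ia as [Ia|Ia].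
      -- eapply jle_trans; [apply (jL_in R P b Hb); exact Ia|]. apply jleJ1.
      -- eapply jle_trans; [apply (jL_in R P b Hb); exact Ia|]. apply jleJ2.
  + assert (Hs : proj1_sig (tjoin S S') (rep (tjoin S S'))).
    { apply gT_key. apply jle_refl. }
    destruct Hs as [H1 H2]. apply jjoin_lub; split.
    * apply gT_key in H1. exact H1.
    * apply gT_key in H2. exact H2.
Qed.
End Emb.
End T.

Lemma list_code (X : Type) (e : nat -> X) : (forall m n, e m = e n -> m = n) ->
  exists c : X -> list X -> X, forall x L y M, c x L = c y M -> x = y /\ L = M.
Proof.
intro He. destruct (hessenberg X e He) as [h Hh].
set (cl := fix cl (L : list X) : X := match L with nil => e 0 | a :: L' => h a (cl L') end).
exists (fun x L => h x (h (e (length L)) (cl L))).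
intros x L y M E. apply Hh in E. destruct E as [E1 E2]. split; auto.
apply Hh in E2. destruct E2 as [E3 E4]. apply He in E3.
revert M E3 E4. induction L as [|a L IH]; intros [|a' M] E3 E4; simpl in *; try discriminate; auto.
apply Hh in E4. destruct E4 as [E5 E6]. subst. f_equal. apply IH; auto.
Qed.

Lemma inf_seq (R : Poset) (r : R) : (forall L : list R, exists s, ple R s r /\ ~ In s L) ->
  exists e : nat -> R, forall m n, e m = e n -> m = n.
Proof.
intro H.
set (pick := fun L => proj1_sig (constructive_indefinite_description _ (H L))).
assert (Hp : forall L, ~ In (pick L) L).
{ intro L. unfold pick. destruct (constructive_indefinite_description _ (H L)) as [s [Hs1 Hs]]; simpl; auto. }
set (sq := fix sq (n : nat) : list R := match n with 0 => nil | S n' => pick (sq n') :: sq n' end).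
assert (Hin : forall m n, m < n -> In (pick (sq m)) (sq n)).
{ intros m n. induction n as [|n IH]; intro Hmn; [lia|].
  simpl. destruct (Nat.eq_dec m n) as [->|Hne]; [left; auto|right; apply IH; lia]. }
exists (fun n => pick (sq n)). intros m n E.
destruct (Nat.lt_trichotomy m n) as [Hl|[Hl|Hl]]; auto.
- exfalso. apply (Hp (sq n)). rewrite <- E. apply Hin; auto.
- exfalso. apply (Hp (sq m)). rewrite E. apply Hin; auto.
Qed.

Lemma mkQ1_inj (R : Poset) (u v : R) : mkQ R (u :: nil) = mkQ R (v :: nil) -> u = v.
Proof.
intro E.
assert (H1 : qs R (mkQ R (v :: nil)) u) by (rewrite <- E; exists u; split; [left; auto|apply ple_refl]).
assert (H2 : qs R (mkQ R (u :: nil)) v) by (rewrite E; exists v; split; [left; auto|apply ple_refl]).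
destruct H1 as [a [[<-|[]] Ha]]. destruct H2 as [a' [[<-|[]] Ha']].
apply ple_antisym; auto.
Qed.

Lemma final_step (R : Poset) (I : Type) (B : I -> JSL) (P : JSL) :
  ((exists f : Jid (Ifin_le R) -> Jid (jle P), injective f /\ preserves_all_joins Jle Jle f)
   <-> exists i, exists g : B i -> P, jsl_embedding g) ->
  ((~ exists f : Jid (Ifin_le R) -> Jid (jle P), injective f /\ preserves_all_joins Jle Jle f)
   <-> (forall i : I, ~ exists g : B i -> P, jsl_embedding g)).
Proof. intro E. split; intro H. - intros i Hi. apply H, E. eauto. - intro Hf. apply E in Hf. destruct Hf as [i Hi]. apply (H i Hi). Qed.

Theorem theorem1p4 (R : Poset) :
  exists (I : Type) (idx : I -> (Ifin R -> Prop)),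
    injective idx /\
    exists B : I -> JSL,
      forall P : JSL, has_least P ->
        ((~ exists f : Jid (Ifin_le R) -> Jid (jle P),
              injective f /\ preserves_all_joins Jle Jle f)
         <->
         (forall i : I, ~ exists g : B i -> P, jsl_embedding g)).
Proof.
destruct (classic (forall r : R, exists L, forall s, In s L <-> ple R s r)) as [Hfin|Hinf].
- set (rs := fun (r : R) (L : list R) => exists s, In s L /\ ple R r s).
  exists unit, (fun _ _ => True). split.
  { intros [] [] _; auto. }
  exists (fun _ => TJ R rs). intros P [b Hb]. apply final_step. split.
  + intro Hf. apply (A_left R P b Hb) in Hf. destruct Hf as [x Hx].
    set (Lr := fun r => proj1_sig (constructive_indefinite_description _ (Hfin r))).
    assert (HLr : forall r s, In s (Lr r) <-> ple R s r).
    { intro r. unfold Lr. destruct (constructive_indefinite_description _ (Hfin r)); auto. }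
    set (x' := fun r => jL R P b x (Lr r)).
    assert (Hmono : forall a s, ple R a s -> jle P (x' a) (x' s)).
    { intros a s Has. unfold x'. apply jL_le; auto. intros t It. apply (jL_in R P b Hb).
      apply HLr. apply HLr in It. eapply ple_trans; eauto. }
    exists tt. apply (Wit_to_T R rs P b Hb x').
    intros a M. split.
    * intros [s [Is Has]]. eapply jle_trans; [apply Hmono; exact Has|]. apply (jL_in R P b Hb); auto.
    * intro Hle. apply NNPP. intro Hn.
      set (L' := concat (map Lr M)).
      apply (Hx a L').
      -- intros t It Hat. unfold L' in It. apply in_concat in It. destruct It as [l [Il It]].
         apply in_map_iff in Il. destruct Il as [s [<- Is]]. apply HLr in It.
         apply Hn. exists s; split; auto. eapply ple_trans; eauto.
      -- eapply jle_trans; [|eapply jle_trans; [exact Hle|]].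
         ++ unfold x'. apply (jL_in R P b Hb). apply HLr. apply ple_refl.
         ++ apply jL_le; auto. intros s Is. unfold x'. apply jL_le; auto. intros t It.
            apply (jL_in R P b Hb). unfold L'. apply in_concat. exists (Lr s); split; auto.
            apply in_map; auto.
  + intros [i Hg]. apply (A_right R P b Hb). apply (T_to_Wit R rs P b Hb); auto.
    * intros a L Ia. exists a; split; auto. apply ple_refl.
- apply not_all_ex_not in Hinf. destruct Hinf as [r0 Hr0].
  assert (Hr : forall L : list R, exists s, ple R s r0 /\ ~ In s L).
  { intro L. apply NNPP. intro Hn. apply Hr0.
    exists (filter (fun s => if excluded_middle_informative (ple R s r0) then true else false) L).
    intro s. rewrite filter_In. destruct (excluded_middle_informative (ple R s r0)) as [Hs|Hs].
    - split; [tauto|]. intro; split; auto. apply NNPP. intro Hn2. apply Hn. eauto.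
    - split; [intros [_ F]; discriminate|tauto]. }
  destruct (inf_seq R r0 Hr) as [e He].
  destruct (list_code R e He) as [c Hc].
  set (enc := fun r L => mkQ R (c r L :: nil)).
  assert (Henc : forall r L r' L', enc r L = enc r' L' -> r = r' /\ L = L').
  { intros r L r' L' E. apply mkQ1_inj in E. apply Hc; auto. }
  set (dec := fun (M : Ifin R -> Prop) (r : R) (L : list R) => M (enc r L)).
  set (goodR := fun rho : R -> list R -> Prop =>
     (forall a L, In a L -> rho a L) /\ (forall r L, rho r L -> exists s, In s L /\ ple R r s)).
  exists {M : Ifin R -> Prop | goodR (dec M)}, (fun i => proj1_sig i). split.
  { intros [M1 H1] [M2 H2] E. simpl in E. subst. f_equal. apply proof_irrelevance. }
  exists (fun i => TJ R (dec (proj1_sig i))). intros P [b Hb]. apply final_step. split.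
  + intro Hf. apply (A_left R P b Hb) in Hf. destruct Hf as [x Hx].
    set (Mx := fun q => exists r L, enc r L = q /\ jle P (x r) (jL R P b x L)).
    assert (Hdec : forall a L, dec Mx a L <-> jle P (x a) (jL R P b x L)).
    { intros a L. unfold dec, Mx. split.
      - intros [r [L0 [E H]]]. apply Henc in E. destruct E; subst; auto.
      - intro H; eauto. }
    assert (Hg : goodR (dec Mx)).
    { split.
      - intros a L Ia. apply Hdec. apply (jL_in R P b Hb); auto.
      - intros r L H. apply Hdec in H. apply NNPP. intro Hn. apply (Hx r L); auto.
        intros s Is Hrs. apply Hn; eauto. }
    exists (exist _ Mx Hg). simpl. apply (Wit_to_T R (dec Mx) P b Hb x). auto.
  + intros [[M HM] Hg]. simpl in Hg. apply (A_right R P b Hb).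
    apply (T_to_Wit R (dec M) P b Hb); auto; apply HM.
Qed.
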